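(* Let $U$ be a subgroup of $G^*$. Then there exists a resolute and $U$-symmetric matching mechanism if and only if $C^U(p)\neq\varnothing$ for every $p\in\mathcal{P}$.
   Context: Fix $n\ge 2$, $W=\{1,\dots,n\}$, $M=\{n+1,\dots,2n\}$, $I=W\cup M$. Permutations compose right-to-left. A preference profile is a function $p$ on $I$ assigning to each $x\in W$ a linear order $p(x)$ on $M$ and to each $y\in M$ a linear order $p(y)$ on $W$; $\mathcal{P}$ is the set of preference profiles. A matching is a permutation $\mu$ of $I$ with $\mu(W)=M$, $\mu(M)=W$, $\mu(\mu(z))=z$; $\mathcal{M}$ is the set of matchings. $G^*=\{\varphi\in\mathrm{Sym}(I):\{\varphi(W),\varphi(M)\}=\{W,M\}\}$. For a linear order $R$ on $X\subseteq I$ and $\varphi\in\mathrm{Sym}(I)$, $\varphi R$ is the relation on $\varphi(X)$ with $(a,b)\in\varphi R$ iff $(\varphi^{-1}(a),\varphi^{-1}(b))\in R$. For $\varphi\in G^*$, $p^\varphi(z)=\varphi\,p(\varphi^{-1}(z))$; $\mu^\varphi=\varphi\mu\varphi^{-1}$; $S^\varphi=\{\mu^\varphi:\mu\in S\}$. A matching mechanism is a correspondence $F$ from $\mathcal{P}$ to $\mathcal{M}$; resolute if $|F(p)|=1$ for all $p$; $U$-symmetric if $F(p^\varphi)=F(p)^\varphi$ for all $p$, $\varphi\in U$. $\mathrm{Stab}_U(p)=\{\varphi\in U:p^\varphi=p\}$ and $C^U(p)=\{\mu\in\mathcal{M}:\mu^\varphi=\mu\text{ for all }\varphi\in\mathrm{Stab}_U(p)\}$.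 *)

(* Defs.v *)
(* Agents I = {0,...,2n-1} ('I_(n+n)); W = {0..n-1}, M = {n..2n-1}
   (0-based shift of the paper's {1..n}, {n+1..2n}). *)
From mathcomp Require Import all_boot all_fingroup.
Set Implicit Arguments. Unset Strict Implicit. Unset Printing Implicit Defensive.
Local Open Scope group_scope.

Section Matching.
Variable n : nat.

Definition agent := 'I_(n + n).
Definition Wset : {set agent} := [set i : agent | (i < n)%N].
Definition Mset : {set agent} := [set i : agent | (n <= i)%N].

Definition relation := {set agent * agent}.

Definition linear_order_on (X : {set agent}) (R : relation) : Prop :=
  [/\ R \subset setX X X,
      (forall a, a \in X -> (a, a) \in R),
      (forall a b, (a, b) \in R -> (b, a) \in R -> a = b),
      (forall a b c, (a, b) \in R -> (b, c) \in R -> (a, c) \in R) &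
      (forall a b, a \in X -> b \in X -> ((a, b) \in R) || ((b, a) \in R))].

Definition profile := {ffun agent -> relation}.

Definition is_profile (p : profile) : Prop :=
  (forall x, x \in Wset -> linear_order_on Mset (p x)) /\
  (forall y, y \in Mset -> linear_order_on Wset (p y)).

Definition is_matching (mu : {perm agent}) : Prop :=
  [/\ mu @: Wset = Mset, mu @: Mset = Wset & mu * mu = 1].

Definition Gstar : {set {perm agent}} :=
  [set phi : {perm agent} | [set phi @: Wset; phi @: Mset] == [set Wset; Mset]].

Definition rel_act (phi : {perm agent}) (R : relation) : relation :=
  [set ab : agent * agent | ((phi^-1)%g ab.1, (phi^-1)%g ab.2) \in R].

Definition prof_act (p : profile) (phi : {perm agent}) : profile :=
  [ffun z => rel_act phi (p ((phi^-1)%g z))].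

(* mu^phi = phi mu phi^-1 (right-to-left composition); in MathComp's
   left-to-right perm product this is the conjugate mu ^ phi = phi^-1 * mu * phi,
   i.e. (mu ^ phi) z = phi (mu (phi^-1 z)). *)
Definition match_act (mu phi : {perm agent}) : {perm agent} := mu ^ phi.

Definition set_act (S : {set {perm agent}}) (phi : {perm agent}) : {set {perm agent}} :=
  [set match_act mu phi | mu in S].

Definition mechanism := profile -> {set {perm agent}}.

Definition is_mechanism (F : mechanism) : Prop :=
  forall p, is_profile p -> forall mu, mu \in F p -> is_matching mu.

Definition resolute (F : mechanism) : Prop :=
  forall p, is_profile p -> #|F p| = 1%N.

Definition U_symmetric (U : {set {perm agent}}) (F : mechanism) : Prop :=
  forall p phi, is_profile p -> phi \in U -> F (prof_act p phi) = set_act (F p) phi.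

Definition Stab (U : {set {perm agent}}) (p : profile) : {set {perm agent}} :=
  [set phi in U | prof_act p phi == p].

Definition CU (U : {set {perm agent}}) (p : profile) (mu : {perm agent}) : Prop :=
  is_matching mu /\ (forall phi, phi \in Stab U p -> match_act mu phi = mu).

End Matching.

(* Main.v *)
From Stdlib Require Import ClassicalEpsilon.
Require Import Defs.
From mathcomp Require Import all_boot all_fingroup.
Set Implicit Arguments. Unset Strict Implicit. Unset Printing Implicit Defensive.
Local Open Scope group_scope.

Section Aux.
Variable n : nat.
Implicit Types (p : profile n) (phi psi mu : {perm agent n}).

Lemma prof_act1 p : prof_act p 1 = p.
Proof.
apply/ffunP => z; rewrite !ffunE /rel_act invg1 perm1.
by apply/setP => -[a b]; rewrite inE /= !perm1.
Qed.

Lemma prof_actM p phi psi : prof_act (prof_act p phi) psi = prof_act p (phi * psi).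
Proof.
apply/ffunP => z; rewrite !ffunE /rel_act invMg permM.
by apply/setP => -[a b]; rewrite !inE /= !permM.
Qed.

Lemma imset_inv phi (A B : {set agent n}) : phi @: A = B -> phi^-1 @: B = A.
Proof.
move=> <-; rewrite -imset_comp; apply/setP => x.
rewrite (eq_imset _ (g := id)) ?imset_id // => y /=; by rewrite permK.
Qed.

Lemma WneM : (0 < n)%N -> Wset n != Mset n.
Proof.
move=> hn; apply/eqP => /setP /(_ (@Ordinal (n + n) 0 (ltn_addr n hn))).
by rewrite !inE /= leqn0 hn; case: n hn.
Qed.

Lemma Gstar_cases phi : (0 < n)%N -> phi \in Gstar n ->
  (phi @: Wset n = Wset n /\ phi @: Mset n = Mset n) \/
  (phi @: Wset n = Mset n /\ phi @: Mset n = Wset n).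
Proof.
move=> hn; rewrite inE => /eqP E.
have hne := WneM hn.
have hW : phi @: Wset n \in [set Wset n; Mset n] by rewrite -E !inE eqxx.
have hM : phi @: Mset n \in [set Wset n; Mset n] by rewrite -E !inE eqxx orbT.
have hWM : phi @: Wset n != phi @: Mset n.
  apply: contra hne => /eqP /(imset_inj (@perm_inj _ phi)) ->; done.
move: hW hM hWM; rewrite !inE => /orP[]/eqP-> /orP[]/eqP->; rewrite ?eqxx //; auto.
Qed.

Lemma matching_act mu phi : (0 < n)%N -> phi \in Gstar n -> is_matching mu ->
  is_matching (match_act mu phi).
Proof.
move=> hn hphi [h1 h2 h3].
have imC : forall A : {set agent n}, (match_act mu phi) @: A = phi @: (mu @: (phi^-1 @: A)).
  move=> A; rewrite /match_act -!imset_comp; apply: eq_imset => x /=.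
  by rewrite /conjg !permM.
split; rewrite ?imC.
- case: (Gstar_cases hn hphi) => -[e1 e2].
  + by rewrite (imset_inv e1) h1 e2.
  + by rewrite (imset_inv e2) h2 e1.
- case: (Gstar_cases hn hphi) => -[e1 e2].
  + by rewrite (imset_inv e2) h2 e1.
  + by rewrite (imset_inv e1) h1 e2.
- by rewrite /match_act -conjMg h3 conj1g.
Qed.

End Aux.

Definition pb (P : Prop) : bool := if excluded_middle_informative P then true else false.
Lemma pbP (P : Prop) : pb P = true <-> P.
Proof. by rewrite /pb; case: excluded_middle_informative. Qed.

Theorem corollary1 (n : nat) (hn : (2 <= n)%N) (U : {group {perm agent n}})
    (hU : U \subset Gstar n) :
  (exists F : mechanism n,
      is_mechanism F /\ resolute F /\ U_symmetric U F) <->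
  (forall p : profile n, is_profile p -> exists mu, CU U p mu).
Proof.
have hn0 : (0 < n)%N by apply: leq_trans hn.
split.
  move=> [F [hm [hr hs]]] p hp.
  have [mu hmu] := cards1P (introT eqP (hr p hp)).
  exists mu; split.
    by apply: (hm p hp); rewrite hmu set11.
  move=> phi; rewrite inE => /andP [hphi /eqP hpp].
  have := hs p phi hp hphi; rewrite hpp /set_act hmu imset_set1.
  by move/set1_inj.
move=> hC.
pose orb (p : profile n) := [set prof_act p phi | phi in U].
pose Q (p : profile n) := [set q in orb p | pb (is_profile q)].
pose rr (p : profile n) := odflt [ffun=> set0] [pick q in Q p].
pose mu0 (r : profile n) := epsilon (inhabits (1 : {perm agent n})) (CU U r).
pose F : mechanism n := fun p =>
  [set match_act (mu0 (rr p)) phi | phi in [set phi in U | prof_act (rr p) phi == p]].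
have orbM : forall p phi, phi \in U -> orb (prof_act p phi) = orb p.
  move=> p phi hphi; apply/setP => q; rewrite /orb; apply/imsetP/imsetP => -[psi hpsi ->].
    by exists (phi * psi); rewrite ?groupM // prof_actM.
  exists (phi^-1 * psi); rewrite ?groupM ?groupV // prof_actM mulgA mulgV mul1g //.
have rrM : forall p phi, phi \in U -> rr (prof_act p phi) = rr p.
  by move=> p phi hphi; rewrite /rr /Q (orbM p phi hphi).
have rrP : forall p, is_profile p ->
   is_profile (rr p) /\ exists2 t, t \in U & rr p = prof_act p t.
  move=> p hp.
  have hpQ : p \in Q p.
    rewrite inE; apply/andP; split; last by apply/pbP.
    by apply/imsetP; exists 1; rewrite ?group1 ?prof_act1.
  rewrite /rr; case: pickP => [q|/(_ p)]; last by rewrite hpQ.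
  rewrite inE => /andP [/imsetP [t ht ->] /pbP hq]; split => //.
  by exists t.
have mu0P : forall p, is_profile p -> CU U (rr p) (mu0 (rr p)).
  move=> p hp; have [hr _] := rrP p hp.
  by apply: epsilon_spec; apply: hC.
exists F; split; [|split].
- move=> p hp mu /imsetP [phi]; rewrite inE => /andP [hphi _] ->.
  apply: matching_act => //; first by apply: (subsetP hU).
  by case: (mu0P p hp).
- move=> p hp; apply/eqP/cards1P.
  have [_ [t ht er]] := rrP p hp.
  have [_ hfix] := mu0P p hp.
  exists (match_act (mu0 (rr p)) t^-1).
  apply/setP => mu; rewrite inE; apply/imsetP/eqP.
    move=> [phi]; rewrite inE => /andP [hphi /eqP ephi] ->.
    have hst : phi * t \in Stab U (rr p).
      rewrite inE groupM //= -prof_actM ephi er; done.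
    by rewrite /match_act -{2}(hfix _ hst) /match_act -conjgM mulgK.
  move=> ->; exists t^-1; rewrite // inE groupV ht /= er prof_actM mulgV prof_act1 //.
- move=> p phi hp hphi; rewrite /F /set_act rrM //.
  apply/setP => mu; apply/imsetP/imsetP.
    move=> [psi]; rewrite inE => /andP [hpsi /eqP epsi] ->.
    exists (match_act (mu0 (rr p)) (psi * phi^-1)).
      apply/imsetP; exists (psi * phi^-1) => //.
      rewrite inE groupM ?groupV //= -prof_actM epsi prof_actM mulgV prof_act1 //.
    by rewrite /match_act -conjgM -mulgA mulVg mulg1.
  move=> [nu /imsetP [chi]]; rewrite inE => /andP [hchi /eqP echi] -> ->.
  exists (chi * phi); last by rewrite /match_act conjgM.
  by rewrite inE groupM //= -prof_actM echi.
Qed.
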